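(* If $t\le n-2$, then the action protocol $P^{\mathit{basic}}$ implements the knowledge-based program $\mathbf P^0$ in the EBA context $\gamma_{\mathit{basic},n,t}$, where $P^{\mathit{basic}}_i$ is: if $\mathit{decided}_i\ne\bot$ then $\mathtt{noop}$; else if $\mathit{init}_i=0$ or $\mathit{rd}_i=0$ then $\mathtt{decide}_i(0)$; else if $\#1_i>n-\mathit{time}_i$ or $\mathit{rd}_i=1$ then $\mathtt{decide}_i(1)$; else $\mathtt{noop}$.
   Context: Agents and runs. There are $n$ agents $\mathit{Agt}=\{1,\ldots,n\}$; time is $m\in\mathbb N$, and round $m+1$ is the step from time $m$ to time $m+1$. An information-exchange protocol $\mathcal E$ specifies for each agent $i$: a set $L_i$ of local states, a set $I_i\subseteq L_i$ of initial states, a set $A_i$ of actions, a set $M_i$ of messages, a function giving for $s\in L_i$, $a\in A_i$ and each agent $j$ the message $\mu_{ij}(s,a)\in M_i\cup\{\bot\}$ that $i$ sends to $j$ ($\bot$ means no message), and a transition function $\delta_i:L_i\times A_i\times\prod_j(M_j\cup\{\bot\})\to L_i$. A failure pattern is a pair $(\mathcal N,F)$ with $\mathcal N\subseteq\mathit{Agt}$ (the nonfaulty agents) and $F:\mathbb N\times\mathit{Agt}\times\mathit{Agt}\to\{0,1\}$, where $F(m,i,j)=0$ means the message from $i$ to $j$ in round $m+1$ is lost. The sending-omissions failure model $SO(t)$ ($t<n$) is the set of failure patterns with $|\mathit{Agt}\setminus\mathcal N|\le t$ such that $F(m,i,j)=0$ implies $i\notin\mathcal N$. An action protocol $P$ gives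 each agent $i$ a map $P_i:L_i\to A_i$. Given $\mathcal E$, a failure model $\mathcal F$ and $P$, each initial global state (a failure pattern $(\mathcal N,F)\in\mathcal F$ and an $s_i\in I_i$ for each $i$) determines a unique run $r$: if $r_i(k)$ is $i$'s local state at time $k$, then $i$ performs $a_i=P_i(r_i(k))$, agent $j$ receives $m'_{ij}=\mu_{ij}(r_i(k),a_i)$ if $F(k,i,j)=1$ and $\bot$ otherwise, and $r_i(k+1)=\delta_i(r_i(k),a_i,(m'_{1i},\ldots,m'_{ni}))$; the failure pattern is fixed in the run and $\mathcal N(r)$ denotes its nonfaulty set. $\mathcal R_{\mathcal E,\mathcal F,P}$ is the set of all such runs. An interpreted system $\mathcal I=(\mathcal R,\pi)$ is a set of runs with an interpretation $\pi$ of primitive propositions at points $(r,m)$. $\mathcal I,(r,m)\models K_i\varphi$ iff $\varphi$ holds at all points $(r',m')$ of $\mathcal I$ with $r'_i(m')=r_i(m)$; $\bigcirc\varphi$ holds at $(r,m)$ iff $\varphi$ holds at $(r,m+1)$; $\ominus\varphi$ holds at $(r,m)$ iff $m>0$ and $\varphi$ holds at $(r,m-1)$. EBA contexts. An EBA context is a tuple $\gamma=(\mathcal E,\mathcal F,\pi)$ such that: each $A_i=\{\mathtt{decide}_i(0),\mathtt{decide}_i(1),\mathtt{noop}\}$; local states have the form $\langle \mathit{time}_i,\mathit{init}_i,\mathit{decided}_i,\mathit{rd}_i,\ldots\rangle$ with $\mathit{time}_i\in\mathbb N$, $\mathit{init}_i\in\{0,1\}$ (initial preference), $\mathit{decided}_i,\mathit{rd}_i\in\{0,1,\bot\}$;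 initial states have the form $\langle 0,\mathit{init}_i,\bot,\bot,\ldots\rangle$; there are pairwise disjoint sets $M^0,M^1,M^2$ with $\bot\notin M^0\cup M^1$ such that an agent performing $\mathtt{decide}_i(0)$ (resp. $\mathtt{decide}_i(1)$, resp. $\mathtt{noop}$) sends every agent a message in $M^0$ (resp. $M^1$, resp. $M^2$); $\delta_i$ increments $\mathit{time}_i$, sets $\mathit{decided}_i:=v$ if the action is $\mathtt{decide}_i(v)$ (otherwise leaves it unchanged), and sets $\mathit{rd}_i$ to $0$ (resp. $1$) if in that round $i$ received a message from an agent performing $\mathtt{decide}(0)$ (resp. $\mathtt{decide}(1)$), and to $\bot$ otherwise; $\pi$ interprets $\mathit{init}_i=v$, $\mathit{decided}_i=v$, $\mathit{time}_i=k$ by reading $i$'s local state, and $i\in\mathcal N$ as true at $(r,m)$ iff $i\in\mathcal N(r)$. Abbreviations: $\mathit{jdecided}_i=v$ is $\mathit{decided}_i=v\wedge\ominus(\mathit{decided}_i=\bot)$; $\mathit{deciding}_i=v$ is $\mathit{decided}_i=\bot\wedge\bigcirc(\mathit{decided}_i=v)$. For an action protocol $P$, $\mathcal I_{\gamma,P}=(\mathcal R_{\mathcal E,\mathcal F,P},\pi)$. Knowledge-based programs. A knowledge-based program $\mathbf P=(\mathbf P_1,\ldots,\mathbf P_n)$ has each $\mathbf P_i$ generated by $\mathbf P_i::=a\mid\text{if }\varphi\text{ then }\mathbf P_i\text{ else }\mathbf P_i$ with $a\in A_i$ and each test $\varphi$ a Boolean combination of formulas $K_i\psi$ and propositions determined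 by $i$'s local state; its truth at a point depends only on $i$'s local state. Given $\mathcal I$ and a local state $s$ of $i$, $\mathbf P_i^{\mathcal I}(s)$ is the action obtained by evaluating the tests at $s$ in $\mathcal I$. An action protocol $P$ implements $\mathbf P$ in $\gamma$ if $P_i(s)=\mathbf P_i^{\mathcal I}(s)$ for every $i$ and every local state $s$ of $i$ arising in $\mathcal I=\mathcal I_{\gamma,P}$. The program $\mathbf P^0$: for each agent $i$, $\mathbf P^0_i$ is: if $\mathit{decided}_i\neq\bot$ then $\mathtt{noop}$; else if $\mathit{init}_i=0\vee K_i(\bigvee_{j\in\mathit{Agt}}\mathit{jdecided}_j=0)$ then $\mathtt{decide}_i(0)$; else if $K_i(\bigwedge_{j\in\mathit{Agt}}\neg(\mathit{deciding}_j=0))$ then $\mathtt{decide}_i(1)$; else $\mathtt{noop}$. Basic context. $\gamma_{\mathit{basic},n,t}=(\mathcal E_{\mathit{basic}}(n),SO(t),\pi_{\mathit{basic},n})$, where local states are $\langle\mathit{time}_i,\mathit{init}_i,\mathit{decided}_i,\mathit{rd}_i,\#1_i\rangle$ with $\#1_i\in\{0,\ldots,n\}$, initial states are $\langle0,\mathit{init}_i,\bot,\bot,0\rangle$, $M_i=\{0,1,(\mathit{init},1)\}$ ($M^0=\{0\},M^1=\{1\},M^2=\{(\mathit{init},1),\bot\}$), $\mu_{ij}(s,\mathtt{decide}_i(v))=v$, $\mu_{ij}(s,\mathtt{noop})=(\mathit{init},1)$ if $s$ has the form $\langle m,1,\bot,\bot,k\rangle$, and $\mu_{ij}(s,a)=\bot$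 otherwise; $\delta_i$ updates the first four components as in EBA contexts and sets $\#1_i$ to the number of $(\mathit{init},1)$ messages received in the current round if $\mathit{decided}_i=\bot$ and $i$ receives no message $0$ or $1$ in that round, and to $0$ otherwise; $\pi_{\mathit{basic},n}$ interprets $\mathit{time}_i=k$, $\mathit{init}_i=v$, $\mathit{decided}_i=v$, $\mathit{rd}_i=v$, $\#1_i=k$, $i\in\mathcal N$ in the obvious way. *)

(* Defs.v *)
From mathcomp Require Import all_boot.
Set Implicit Arguments. Unset Strict Implicit. Unset Printing Implicit Defensive.

(* Values 0/1 are encoded as bool: false = 0, true = 1.  [None] encodes bot. *)

Record lstate := LState {
  l_time : nat;
  l_init : bool;
  l_decided : option bool;
  l_rd : option bool;
  l_cnt : nat
}.

Inductive action := Decide of bool | Noop.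

(** Messages M_i = {0, 1, (init,1)}; [option msg] with [None] = bot. *)
Inductive msg := MVal of bool | MInit1.

Definition is_val (v : bool) (om : option msg) : bool :=
  match om with Some (MVal w) => w == v | _ => false end.
Definition is_init1 (om : option msg) : bool :=
  match om with Some MInit1 => true | _ => false end.

Definition init_state (v : bool) : lstate := LState 0 v None None 0.

(** mu_ij(s,a) (independent of the receiver j). *)
Definition mu (s : lstate) (a : action) : option msg :=
  match a with
  | Decide v => Some (MVal v)
  | Noop =>
      match s with
      | LState _ true None None _ => Some MInit1
      | _ => None
      end
  end.

Definition delta (n : nat) (s : lstate) (a : action)
    (recv : 'I_n -> option msg) : lstate :=
  let got0 := [exists j, is_val false (recv j)] in
  let got1 := [exists j, is_val true (recv j)] in
  LState (l_time s).+1
         (l_init s)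
         (match a with Decide v => Some v | Noop => l_decided s end)
         (if got0 then Some false else if got1 then Some true else None)
         (if (l_decided s == None) && ~~ got0 && ~~ got1
          then #|[pred j | is_init1 (recv j)]| else 0).

(** An initial global state: a failure pattern (N, F) plus initial preferences. *)
Record run (n : nat) := Run {
  r_nonfaulty : {set 'I_n};
  r_F : nat -> 'I_n -> 'I_n -> bool;   (* F m i j = false: message i -> j in round m+1 lost *)
  r_init : 'I_n -> bool
}.

Definition in_SO (n t : nat) (r : run n) : Prop :=
  #|~: r_nonfaulty r| <= t /\
  (forall m i j, r_F r m i j = false -> i \notin r_nonfaulty r).

Definition protocol (n : nat) := 'I_n -> lstate -> action.

Fixpoint gstate (n : nat) (P : protocol n) (r : run n) (m : nat) : 'I_n -> lstate :=
  match m with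
  | 0 => fun i => init_state (r_init r i)
  | m'.+1 =>
      let g := gstate P r m' in
      fun i => @delta n (g i) (P i (g i))
                 (fun j => if r_F r m' j i then mu (g j) (P j (g j)) else None)
  end.

Definition lst (n : nat) (P : protocol n) (r : run n) (m : nat) (i : 'I_n) : lstate :=
  gstate P r m i.

Definition pformula (n : nat) := run n -> nat -> Prop.

Definition Kst (n t : nat) (P : protocol n) (i : 'I_n) (s : lstate)
    (psi : pformula n) : Prop :=
  forall r' m', in_SO t r' -> lst P r' m' i = s -> psi r' m'.

Definition jdecided (n : nat) (P : protocol n) (j : 'I_n) (v : bool) : pformula n :=
  fun r m => l_decided (lst P r m j) = Some v /\
             (0 < m /\ l_decided (lst P r m.-1 j) = None).

Definition deciding (n : nat) (P : protocol n) (j : 'I_n) (v : bool) : pformula n :=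
  fun r m => l_decided (lst P r m j) = None /\ l_decided (lst P r m.+1 j) = Some v.

(** The action prescribed by the knowledge-based program P^0_i at local state s
    in I_{gamma,P} (the nested if-then-else, written relationally since its
    tests are propositions). *)
Definition P0_action (n t : nat) (P : protocol n) (i : 'I_n) (s : lstate)
    (a : action) : Prop :=
  let test0 := l_init s = false \/
               Kst t P i s (fun r m => exists j, jdecided P j false r m) in
  let test1 := Kst t P i s (fun r m => forall j, ~ deciding P j false r m) in
  (l_decided s <> None /\ a = Noop) \/
  (l_decided s = None /\ test0 /\ a = Decide false) \/
  (l_decided s = None /\ ~ test0 /\ test1 /\ a = Decide true) \/
  (l_decided s = None /\ ~ test0 /\ ~ test1 /\ a = Noop).

Definition implements_P0 (n t : nat) (P : protocol n) : Prop :=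
  forall (i : 'I_n) (r : run n) (m : nat), in_SO t r ->
    P0_action t P i (lst P r m i) (P i (lst P r m i)).

(** The protocol P^basic.  "#1_i > n - time_i" (integer subtraction) is written
    as #1_i + time_i > n to avoid truncated nat subtraction. *)
Definition Pbasic (n : nat) : protocol n :=
  fun i s =>
    if l_decided s != None then Noop
    else if (l_init s == false) || (l_rd s == Some false) then Decide false
    else if (n < l_cnt s + l_time s) || (l_rd s == Some true) then Decide true
    else Noop.
Arguments Pbasic n : clear implicits.
Arguments implements_P0 n t P : clear implicits.

(* Main.v *)
Require Import Defs.
From mathcomp Require Import all_boot zify.
Set Implicit Arguments. Unset Strict Implicit. Unset Printing Implicit Defensive.

Definition recvd n (P : protocol n) (r : run n) m (i j : 'I_n) : option msg :=
  if r_F r m j i then mu (gstate P r m j) (P j (gstate P r m j)) else None.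

Lemma gS n (P : protocol n) r m i :
  gstate P r m.+1 i =
  delta (gstate P r m i) (P i (gstate P r m i)) (recvd P r m i).
Proof. by []. Qed.

Lemma time_g n (P : protocol n) r m i : l_time (gstate P r m i) = m.
Proof. by elim: m i => [|m IH] i //=; rewrite IH. Qed.

Lemma init_g n (P : protocol n) r m i : l_init (gstate P r m i) = r_init r i.
Proof. by elim: m i => [|m IH] i //=; rewrite IH. Qed.

Lemma dec_S n (P : protocol n) r m i :
  l_decided (gstate P r m.+1 i) =
  match P i (gstate P r m i) with Decide v => Some v | Noop => l_decided (gstate P r m i) end.
Proof. by []. Qed.

Lemma rd_S n (P : protocol n) r m i :
  l_rd (gstate P r m.+1 i) =
  if [exists j, is_val false (recvd P r m i j)] then Some false
  else if [exists j, is_val true (recvd P r m i j)] then Some true else None.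
Proof. by []. Qed.

Lemma cnt_S n (P : protocol n) r m i :
  l_decided (gstate P r m i) = None -> l_rd (gstate P r m.+1 i) = None ->
  l_cnt (gstate P r m.+1 i) = #|[pred j | is_init1 (recvd P r m i j)]|.
Proof.
move=> Hd; rewrite rd_S.
case E0: [exists j, is_val false (recvd P r m i j)] => //.
case E1: [exists j, is_val true (recvd P r m i j)] => // _.
by rewrite gS /delta /= Hd E0 E1.
Qed.

Lemma rd_false n (P : protocol n) r m i :
  l_rd (gstate P r m.+1 i) = Some false ->
  exists j, r_F r m j i /\ P j (gstate P r m j) = Decide false.
Proof.
rewrite rd_S; case: existsP => [[j Hj] _|_].
  exists j; move: Hj; rewrite /recvd; case: (r_F r m j i) => //.
  case: (P j _) => [v|] /=; last by case: (gstate P r m j) => ? [] [?|] [?|].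
  by case: v.
by case: ifP.
Qed.

Lemma rd_true n (P : protocol n) r m i :
  l_rd (gstate P r m.+1 i) = Some true ->
  exists j, r_F r m j i /\ P j (gstate P r m j) = Decide true.
Proof.
rewrite rd_S; case: ifP => // _; case: existsP => [[j Hj] _|_] //.
exists j; move: Hj; rewrite /recvd; case: (r_F r m j i) => //.
case: (P j _) => [v|] /=; last by case: (gstate P r m j) => ? [] [?|] [?|].
by case: v.
Qed.

Lemma rd_none n (P : protocol n) r m i j v :
  l_rd (gstate P r m.+1 i) = None -> r_F r m j i ->
  P j (gstate P r m j) <> Decide v.
Proof.
rewrite rd_S => H HF HP.
case: v HP => HP.
- move: H; case: ifP => // _; case: ifP => // /negbT/existsPn/(_ j).
  by rewrite /recvd HF HP.
- move: H; case: ifP => // /negbT/existsPn/(_ j).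
  by rewrite /recvd HF HP.
Qed.

Lemma rd_0 n (P : protocol n) r i : l_rd (gstate P r 0 i) = None.
Proof. by []. Qed.

Lemma Pb_decided n i s : l_decided s <> None -> Pbasic n i s = Noop.
Proof. by case: s => tm ini [d|] rd c //= _; rewrite /Pbasic. Qed.

Lemma Pb_undec n i s v : Pbasic n i s = Decide v -> l_decided s = None.
Proof. by case: s => tm ini [d|] rd c //=; rewrite /Pbasic. Qed.

Lemma Pb_false n i s : Pbasic n i s = Decide false ->
  l_init s = false \/ l_rd s = Some false.
Proof.
case: s => tm [] [d|] [[]|] c //=; rewrite /Pbasic /=; try by auto.
all: by case: ifP.
Qed.

Lemma Pb_true n i s : Pbasic n i s = Decide true ->
  l_init s = true /\ l_rd s <> Some false /\ (n < l_cnt s + l_time s \/ l_rd s = Some true).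
Proof.
case: s => tm [] [d|] [[]|] c //=; rewrite /Pbasic /=; try by auto.
- by move=> _; split=> //; split=> //; right.
- by rewrite orbF; case: ifP => // H _; split=> //; split=> //; left.
Qed.

Lemma Pb_noop n i s : Pbasic n i s = Noop -> l_decided s = None ->
  l_init s = true /\ l_rd s = None /\ l_cnt s + l_time s <= n.
Proof.
case: s => tm [] [d|] [[]|] c //=; rewrite /Pbasic /=.
- by rewrite orbT.
- by rewrite orbF; case: ifP => // H _ _; split=> //; split=> //; rewrite leqNgt H.
Qed.

Lemma Pb_rd n i s : l_decided s = None -> l_rd s <> None ->
  exists v, Pbasic n i s = Decide v.
Proof.
case: s => tm [] [d|] [[]|] c //= _ _; rewrite /Pbasic /= ?orbT; eauto.
Qed.

Lemma Pb_quiet n i s : l_init s = true -> l_decided s = None -> l_rd s = None ->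
  l_cnt s + l_time s <= n -> Pbasic n i s = Noop /\ mu s Noop = Some MInit1.
Proof.
case: s => tm [] [d|] [[]|] c //= _ _ _; rewrite /Pbasic /= => H.
by rewrite ltnNge H.
Qed.

Lemma mu_init1 s a : is_init1 (mu s a) -> a = Noop /\ l_decided s = None.
Proof. by case: a => [v|] //; case: s => tm [] [d|] [[]|] c. Qed.

Lemma mu_val s a v : is_val v (mu s a) -> a = Decide v.
Proof.
case: a => [w|] /=; first by move/eqP->.
by case: s => tm [] [d|] [[]|] c.
Qed.

Lemma dec_mono n (P : protocol n) r m m' i : m <= m' ->
  l_decided (gstate P r m i) <> None -> l_decided (gstate P r m' i) <> None.
Proof.
elim: m' => [|m' IH]; first by rewrite leqn0 => /eqP->.
rewrite leq_eqVlt => /orP[/eqP-> //|Hlt] Hd.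
rewrite dec_S; case: (P i _) => // ; exact: IH.
Qed.

Lemma dec_origin n (P : protocol n) r m i v :
  l_decided (gstate P r m i) = Some v -> exists a, a < m /\ P i (gstate P r a i) = Decide v.
Proof.
elim: m => [|m IH] //; rewrite dec_S.
case E: (P i _) => [w|]; first by case=> <-; exists m.
by case/IH=> a [Ha HP]; exists a; split=> //; apply: ltnW.
Qed.

Lemma init_false_dec n r m i : r_init r i = false -> 0 < m ->
  l_decided (gstate (Pbasic n) r m i) <> None.
Proof.
move=> Hi Hm; apply: (@dec_mono _ _ _ 1) => //.
by rewrite dec_S /= Hi /Pbasic.
Qed.

Lemma deciding_act n (P : protocol n) r m k v :
  deciding P k v r m -> P k (gstate P r m k) = Decide v.
Proof.
rewrite /deciding /lst dec_S; case=> ->.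
by case: (P k _) => [w [->]|].
Qed.

Definition Dset n (P : protocol n) r l := [pred x : 'I_n | l_decided (gstate P r l x) != None].

Lemma inDset n (P : protocol n) r l x :
  (x \in Dset P r l) = (l_decided (gstate P r l x) != None).
Proof. by []. Qed.

Lemma chain_count n r a k : deciding (Pbasic n) k false r a ->
  a.+1 <= #|Dset (Pbasic n) r a.+1|.
Proof.
elim: a k => [|a IH] k Hk.
  apply/card_gt0P; exists k.
  have H1 : l_decided (gstate (Pbasic n) r 1 k) != None.
    by case: Hk => _; rewrite /lst => ->.
  exact: H1.
have HP := deciding_act Hk.
case: (Pb_false HP) => [Hi|Hrd].
  case: Hk => Hk _.
  have Hin : r_init r k = false by rewrite -(init_g (Pbasic n) r a.+1 k).
  by exfalso; apply: (@init_false_dec n r a.+1 k Hin (ltn0Sn a)).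
case: (rd_false Hrd) => j [_ Hj].
have Hdj : deciding (Pbasic n) j false r a.
  by split; rewrite /lst ?dec_S ?Hj //; apply: (Pb_undec Hj).
have := IH _ Hdj.
have Hsub : [predU1 k & Dset (Pbasic n) r a.+1] \subset Dset (Pbasic n) r a.+2.
  apply/subsetP=> x /predU1P [->|Hx].
    by rewrite inDset; case: Hk => _; rewrite /lst => ->.
  rewrite inDset; apply/eqP; apply: (@dec_mono _ _ _ a.+1) => //; exact/eqP.
have := subset_leq_card Hsub; rewrite cardU1.
have -> : k \notin Dset (Pbasic n) r a.+1.
  by rewrite inDset negbK; case: Hk => Hk _; move: Hk; rewrite /lst => ->.
rewrite add1n; move=> H1 H2; exact: leq_trans H1.
Qed.

Lemma key n r l j : Pbasic n j (gstate (Pbasic n) r l j) = Decide true ->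
  forall k, ~ deciding (Pbasic n) k false r l.
Proof.
elim: l j => [|l IH] j HP k Hk.
  have [_ [_ H]] := Pb_true HP; move: H => /=.
  by case; rewrite ?ltn0.
have HPk := deciding_act Hk.
have [p [Hp Hdp]] : exists p, Pbasic n p (gstate (Pbasic n) r l p) = Decide false /\
    deciding (Pbasic n) p false r l.
  case: (Pb_false HPk) => [Hi|Hrd].
    case: Hk => Hk _.
    have Hin : r_init r k = false by rewrite -(init_g (Pbasic n) r l.+1 k).
    by exfalso; apply: (@init_false_dec n r l.+1 k Hin (ltn0Sn l)).
  case: (rd_false Hrd) => p [_ Hp]; exists p; split=> //.
  by split; rewrite /lst ?dec_S ?Hp //; apply: (Pb_undec Hp).
have [Hinit [Hnf Hc]] := Pb_true HP.
have Htrue : l_rd (gstate (Pbasic n) r l.+1 j) = Some true -> False.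
  by case/rd_true => q [_ Hq]; apply: (IH q Hq p Hdp).
case: Hc => [Hc|]; last by [].
case Erd: (l_rd (gstate (Pbasic n) r l.+1 j)) => [[]|]; first by apply: Htrue.
  by rewrite Erd in Hnf.
have Hdj := Pb_undec HP.
have Hdj0 : l_decided (gstate (Pbasic n) r l j) = None.
  case E: (l_decided (gstate (Pbasic n) r l j)) => [v|] //.
  by exfalso; apply: (@dec_mono n (Pbasic n) r l l.+1 j) => //; rewrite E.
move: Hc; rewrite (cnt_S Hdj0 Erd) time_g.
have Hsub : [pred x | is_init1 (recvd (Pbasic n) r l j x)] \subset
            [predC Dset (Pbasic n) r l.+1].
  apply/subsetP=> x; rewrite inE /= /recvd.
  case: (r_F r l x j) => // /mu_init1 [HN HD].
  by rewrite inE inDset negbK dec_S HN HD.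
have H1 := subset_leq_card Hsub.
have H2 := cardC (Dset (Pbasic n) r l.+1).
rewrite card_ord in H2.
have H3 := chain_count Hdp.
rewrite ltnNge => /negP; apply; apply: leq_trans (leq_add H1 (leqnn _)) _.
apply: (leq_trans _ (eq_leq H2)); rewrite addnC; apply: leq_add => //.
Qed.

Lemma nf_F n t (r : run n) m x i : in_SO t r -> x \in r_nonfaulty r -> r_F r m x i.
Proof.
case=> _ H Hx; case E: (r_F r m x i) => //.
by have := H _ _ _ E; rewrite Hx.
Qed.

Lemma undec_prev n (P : protocol n) r m i :
  l_decided (gstate P r m.+1 i) = None -> l_decided (gstate P r m i) = None.
Proof.
move=> H; case E: (l_decided (gstate P r m i)) => [v|] //.
by exfalso; apply: (@dec_mono n P r m m.+1 i) => //; rewrite ?E ?H.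
Qed.

Lemma undec_prev' n (P : protocol n) r m m' i : m <= m' ->
  l_decided (gstate P r m' i) = None -> l_decided (gstate P r m i) = None.
Proof.
move=> Hm H; case E: (l_decided (gstate P r m i)) => [v|] //.
by exfalso; apply: (@dec_mono n P r m m' i) => //; rewrite ?E ?H.
Qed.

Lemma nonfaulty_send n t r m i x : in_SO t r ->
  l_decided (gstate (Pbasic n) r m.+1 i) = None ->
  l_rd (gstate (Pbasic n) r m.+1 i) = None ->
  x \in r_nonfaulty r -> recvd (Pbasic n) r m i x = Some MInit1.
Proof.
move=> HSO Hd Hrd Hx.
have HF := @nf_F n t r m x i HSO Hx.
rewrite /recvd HF.
case EP: (Pbasic n x (gstate (Pbasic n) r m x)) => [v|].
  by exfalso; apply: (rd_none Hrd HF EP).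
case Ed: (l_decided (gstate (Pbasic n) r m x)) => [w|].
  exfalso.
  case: (dec_origin Ed) => a [Ha HPa].
  have HFa := @nf_F n t r a x i HSO Hx.
  have Hrda : l_rd (gstate (Pbasic n) r a.+1 i) <> None.
    by move=> E; apply: (rd_none E HFa HPa).
  have Hda : l_decided (gstate (Pbasic n) r a.+1 i) = None.
    by apply: (@undec_prev' _ _ r a.+1 m.+1 i) => //; apply: ltnW.
  case: (Pb_rd i Hda Hrda) => v Hv.
  apply: (@dec_mono n (Pbasic n) r a.+2 m.+1 i) => //.
  by rewrite dec_S Hv.
have [Hi [Hr Hc]] := Pb_noop EP Ed.
by have [_ ->] := Pb_quiet i Hi Ed Hr Hc.
Qed.

Lemma fact1 n t r m i : in_SO t r ->
  l_decided (gstate (Pbasic n) r m.+1 i) = None ->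
  l_rd (gstate (Pbasic n) r m.+1 i) = None ->
  n - t <= l_cnt (gstate (Pbasic n) r m.+1 i).
Proof.
move=> HSO Hd Hrd.
rewrite (cnt_S (undec_prev Hd) Hrd).
have Hsub : r_nonfaulty r \subset [pred j | is_init1 (recvd (Pbasic n) r m i j)].
  apply/subsetP=> x Hx; rewrite inE /=.
  by rewrite (nonfaulty_send HSO Hd Hrd Hx).
have H1 := subset_leq_card Hsub.
have H2 := cardsC (r_nonfaulty r); rewrite card_ord in H2.
case: HSO => H3 _.
apply: leq_trans H1; lia.
Qed.

Lemma cnt_le n r m i :
  l_decided (gstate (Pbasic n) r m.+1 i) = None ->
  l_rd (gstate (Pbasic n) r m.+1 i) = None ->
  l_cnt (gstate (Pbasic n) r m.+1 i) <= n.
Proof.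
move=> Hd Hrd; rewrite (cnt_S (undec_prev Hd) Hrd).
by have := max_card [pred j | is_init1 (recvd (Pbasic n) r m i j)]; rewrite card_ord.
Qed.

Lemma fact2 n t r m i : t <= n -> in_SO t r ->
  l_decided (gstate (Pbasic n) r m.+2 i) = None ->
  l_rd (gstate (Pbasic n) r m.+2 i) = None -> m.+1 <= t.
Proof.
move=> Htn HSO Hd Hrd.
have Hd1 := undec_prev Hd.
have EP : Pbasic n i (gstate (Pbasic n) r m.+1 i) = Noop.
  by move: Hd; rewrite dec_S; case: (Pbasic n i _).
have [_ [Hr1 Hc1]] := Pb_noop EP Hd1.
have := fact1 HSO Hd1 Hr1.
rewrite time_g in Hc1.
lia.
Qed.

Definition Lseq n (i : 'I_n) := i :: rem i (enum 'I_n).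
Definition pos n (i j : 'I_n) := index j (Lseq i).

Lemma Lperm n (i : 'I_n) : perm_eq (enum 'I_n) (Lseq i).
Proof. exact: perm_to_rem (mem_enum _ i). Qed.

Lemma Luniq n (i : 'I_n) : uniq (Lseq i).
Proof. by rewrite -(perm_uniq (Lperm i)) enum_uniq. Qed.

Lemma Lsize n (i : 'I_n) : size (Lseq i) = n.
Proof. by rewrite -(perm_size (Lperm i)) size_enum_ord. Qed.

Lemma Lmem n (i j : 'I_n) : j \in Lseq i.
Proof. by rewrite -(perm_mem (Lperm i)) mem_enum. Qed.

Lemma pos_lt n (i j : 'I_n) : pos i j < n.
Proof. by rewrite /pos; have := index_mem j (Lseq i); rewrite Lmem Lsize. Qed.

Lemma pos_self n (i : 'I_n) : pos i i = 0.
Proof. by rewrite /pos /= eqxx. Qed.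

Lemma pos_nth n (i : 'I_n) p : p < n -> pos i (nth i (Lseq i) p) = p.
Proof. by move=> Hp; rewrite /pos index_uniq ?Luniq ?Lsize. Qed.

Lemma card_pos n (i : 'I_n) k : k <= n -> #|[pred j | pos i j < k]| = k.
Proof.
move=> Hk.
have -> : #|[pred j | pos i j < k]| = #|take k (Lseq i)|.
  apply: eq_card => j; rewrite inE /= in_take_leq // Lsize //.
have /card_uniqP -> : uniq (take k (Lseq i)) by apply: take_uniq; apply: Luniq.
by rewrite size_take Lsize; case: ltnP => // H; apply/eqP; rewrite eqn_leq H Hk.
Qed.

Lemma cards_pos n (i : 'I_n) k : k <= n -> #|[set j | pos i j < k]| = k.
Proof. by move=> Hk; rewrite cardsE; apply: card_pos. Qed.

Lemma lstate_eta s : s = LState (l_time s) (l_init s) (l_decided s) (l_rd s) (l_cnt s).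
Proof. by case: s. Qed.

Lemma quiet_act n r l x :
  l_init (gstate (Pbasic n) r l x) = true ->
  l_decided (gstate (Pbasic n) r l x) = None ->
  l_rd (gstate (Pbasic n) r l x) = None ->
  l_cnt (gstate (Pbasic n) r l x) + l <= n ->
  Pbasic n x (gstate (Pbasic n) r l x) = Noop /\
  mu (gstate (Pbasic n) r l x) Noop = Some MInit1.
Proof. by move=> H1 H2 H3 H4; apply: Pb_quiet => //; rewrite time_g. Qed.

Lemma rd_quiet n (P : protocol n) r m i :
  (forall x v, ~~ is_val v (recvd P r m i x)) -> l_rd (gstate P r m.+1 i) = None.
Proof.
move=> H; rewrite rd_S.
case: existsP => [[x Hx]|_]; first by move: (H x false); rewrite Hx.
case: existsP => [[x Hx]|_] //; by move: (H x true); rewrite Hx.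
Qed.

Definition runA n t (i : 'I_n) m c : run n :=
  Run [set j | pos i j < n - t]
      (fun l j k => (pos i j < n - t) || ((l == m.-1) && (k == i) && (pos i j < c)))
      (fun _ => true).

Lemma runA_SO n t (i : 'I_n) m c : t <= n -> in_SO t (runA t i m c).
Proof.
move=> Htn; split.
  have := cardsC [set j | pos i j < n - t]; rewrite card_ord cards_pos ?leq_subr //.
  by rewrite /runA /= => H; rewrite -(leq_add2l (n - t)) H subnK.
move=> l j k /=; rewrite inE; by case: (pos i j < n - t).
Qed.

Lemma runA_inv n t (i : 'I_n) m c : t <= n -> m <= t.+1 -> forall l, l < m -> forall j,
  l_decided (gstate (Pbasic n) (runA t i m c) l j) = None /\
  l_rd (gstate (Pbasic n) (runA t i m c) l j) = None /\
  l_cnt (gstate (Pbasic n) (runA t i m c) l j) + l <= n.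
Proof.
move=> Htn Hmt; elim=> [|l IH] Hl j; first by [].
have Hq : forall x, Pbasic n x (gstate (Pbasic n) (runA t i m c) l x) = Noop /\
   mu (gstate (Pbasic n) (runA t i m c) l x) Noop = Some MInit1.
  move=> x; have [H1 [H2 H3]] := IH (ltnW Hl) x.
  by apply: quiet_act => //; rewrite init_g.
have Hd : l_decided (gstate (Pbasic n) (runA t i m c) l.+1 j) = None.
  by rewrite dec_S (Hq j).1; case: (IH (ltnW Hl) j).
have Hrd : l_rd (gstate (Pbasic n) (runA t i m c) l.+1 j) = None.
  apply: rd_quiet => x v; rewrite /recvd; case: (r_F _ _ _ _) => //.
  by rewrite (Hq x).1 (Hq x).2.
split=> //; split=> //.
rewrite (cnt_S (undec_prev Hd) Hrd).
have Hsub : [pred x | is_init1 (recvd (Pbasic n) (runA t i m c) l j x)] \subset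
            [pred x | pos i x < n - t].
  apply/subsetP=> x; rewrite !inE /recvd /=.
  have -> : (l == m.-1) = false by apply/eqP; lia.
  by rewrite andFb orbF; case: (pos i x < n - t).
have := subset_leq_card Hsub; rewrite card_pos ?leq_subr // => H.
apply: leq_trans (leq_add H (leqnn _)) _; lia.
Qed.

Lemma runA_final n t (i : 'I_n) m c : t <= n -> m <= t -> n - t <= c -> c <= n ->
  gstate (Pbasic n) (runA t i m.+1 c) m.+1 i = LState m.+1 true None None c /\
  forall j, ~ jdecided (Pbasic n) j false (runA t i m.+1 c) m.+1.
Proof.
move=> Htn Hmt Hc1 Hc2.
have HI := @runA_inv n t i m.+1 c Htn Hmt m (ltnSn m).
have Hq : forall x, Pbasic n x (gstate (Pbasic n) (runA t i m.+1 c) m x) = Noop /\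
   mu (gstate (Pbasic n) (runA t i m.+1 c) m x) Noop = Some MInit1.
  move=> x; have [H1 [H2 H3]] := HI x.
  by apply: quiet_act => //; rewrite init_g.
split; last first.
  move=> j [Hj [_ Hj0]]; move: Hj; rewrite /lst dec_S (Hq j).1.
  by rewrite Hj0.
have Hd : l_decided (gstate (Pbasic n) (runA t i m.+1 c) m.+1 i) = None.
  by rewrite dec_S (Hq i).1; case: (HI i).
have Hrd : l_rd (gstate (Pbasic n) (runA t i m.+1 c) m.+1 i) = None.
  apply: rd_quiet => x v; rewrite /recvd; case: (r_F _ _ _ _) => //.
  by rewrite (Hq x).1 (Hq x).2.
rewrite [LHS]lstate_eta time_g init_g Hd Hrd.
rewrite (cnt_S (undec_prev Hd) Hrd).
congr LState.
rewrite -{2}(@card_pos n i c Hc2); apply: eq_card => x; rewrite !inE /recvd /=.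
rewrite eqxx /= (Hq x).1 (Hq x).2.
case: ltnP => H1; first by rewrite /= (leq_trans H1 Hc1).
by rewrite /= eqxx /=; case: (pos i x < c).
Qed.

Lemma Pb_rd0 n i s : l_decided s = None -> l_rd s = Some false -> Pbasic n i s = Decide false.
Proof. by case: s => tm [] [d|] [[]|] c //= _ _; rewrite /Pbasic /= orbT. Qed.

Definition tgtB m c l := if l.+1 < m then c + l.+1 else 1.

Definition FB n t (i : 'I_n) m c l (j k : 'I_n) : bool :=
  (pos i j < n - t) || ((l == m.-1) && (k == i) && (pos i j < c))
  || ((pos i j == c + l) && (l < m) && (pos i k == tgtB m c l)).

Definition runB n t (i : 'I_n) m c : run n :=
  Run [set j | pos i j < n - t] (FB t i m c) (fun j => pos i j != c).

Lemma runB_SO n t (i : 'I_n) m c : t <= n -> in_SO t (runB t i m c).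
Proof.
move=> Htn; split.
  have := cardsC [set j | pos i j < n - t]; rewrite card_ord cards_pos ?leq_subr //.
  by rewrite /runB /= => H; rewrite -(leq_add2l (n - t)) H subnK.
move=> l j k /=; rewrite inE /FB; by case: (pos i j < n - t).
Qed.

Definition quietB n t (i : 'I_n) m c l (j : 'I_n) :=
  l_decided (gstate (Pbasic n) (runB t i m c) l j) = None /\
  l_rd (gstate (Pbasic n) (runB t i m c) l j) = None /\
  l_cnt (gstate (Pbasic n) (runB t i m c) l j) + l <= n.

Definition InvB n t (i : 'I_n) m c l :=
  (forall j, (pos i j < c) || (c + l < pos i j) -> quietB t i m c l j) /\
  (forall j, pos i j = c + l -> Pbasic n j (gstate (Pbasic n) (runB t i m c) l j) = Decide false).


Lemma quietB_act n t (i : 'I_n) m c l j : (pos i j < c) || (c + l < pos i j) ->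
  quietB t i m c l j ->
  Pbasic n j (gstate (Pbasic n) (runB t i m c) l j) = Noop /\
  mu (gstate (Pbasic n) (runB t i m c) l j) Noop = Some MInit1.
Proof.
move=> Hp [H1 [H2 H3]]; apply: quiet_act => //.
rewrite init_g /=; apply/eqP => E; move: Hp; rewrite E ltnn /=; lia.
Qed.

Lemma recvB_val n t (i : 'I_n) m c l k x v : n - t <= c -> l < m -> InvB t i m c l ->
  is_val v (recvd (Pbasic n) (runB t i m c) l k x) ->
  pos i x = c + l /\ pos i k = tgtB m c l.
Proof.
move=> Hc Hl [HQ HD]; rewrite /recvd.
case HF: (r_F (runB t i m c) l x k) => //.
case Hq: ((pos i x < c) || (c + l < pos i x)).
  by rewrite (quietB_act Hq (HQ x Hq)).1 (quietB_act Hq (HQ x Hq)).2.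
move=> _; move: HF; rewrite /= /FB.
have -> : (pos i x < n - t) = false by apply/negbTE; rewrite -leqNgt; move: Hq; case/norP; lia.
have -> : (pos i x < c) = false by move: Hq; case/norP => /negbTE.
rewrite andbF /= => /andP[/andP[/eqP -> _] /eqP ->]; by [].
Qed.

Lemma recvB_init n t (i : 'I_n) m c l k x : n - t <= c -> l < m -> InvB t i m c l ->
  is_init1 (recvd (Pbasic n) (runB t i m c) l k x) =
  ((pos i x < c) || (c + l < pos i x)) && FB t i m c l x k.
Proof.
move=> Hc Hl [HQ HD]; rewrite /recvd /=.
case Hq: ((pos i x < c) || (c + l < pos i x)).
  rewrite (quietB_act Hq (HQ x Hq)).1 (quietB_act Hq (HQ x Hq)).2.
  by case: (FB _ _ _ _ _ _ _).
rewrite andFb.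
have Hn2 : (pos i x < c) = false by move: Hq; case/norP => /negbTE.
have Hn1 : (pos i x < n - t) = false.
  by apply/negbTE; rewrite -leqNgt; move: Hq; case/norP; lia.
case HF: (FB t i m c l x k) => //.
case E: (pos i x == c + l); first by rewrite (HD x (eqP E)).
by move: HF; rewrite /FB Hn1 Hn2 E andbF.
Qed.

Lemma InvB_0 n t (i : 'I_n) m c : InvB t i m c 0.
Proof.
split=> j.
  by move=> _; rewrite /quietB /=.
by rewrite addn0 /= => ->; rewrite eqxx /Pbasic.
Qed.

Lemma got0_B n t (i : 'I_n) m c l k : l < m -> c + l < n -> InvB t i m c l ->
  pos i k = tgtB m c l ->
  l_rd (gstate (Pbasic n) (runB t i m c) l.+1 k) = Some false.
Proof.
move=> Hl Hcl [HQ HD] Hk; rewrite rd_S.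
case: existsP => [_|H] //; exfalso; apply: H.
set x0 := nth i (Lseq i) (c + l).
have Hx0 : pos i x0 = c + l by apply: pos_nth.
exists x0; rewrite /recvd.
have -> : r_F (runB t i m c) l x0 k.
  by rewrite /= /FB Hx0 eqxx Hl Hk eqxx !orbT.
by rewrite (HD x0 Hx0).
Qed.

Lemma InvB_S n t (i : 'I_n) m c l : t <= n -> n - t <= c -> c + m <= n -> l.+1 < m ->
  InvB t i m c l -> InvB t i m c l.+1.
Proof.
move=> Htn Hc Hcm Hl Hinv; have Hinv' := Hinv; case: Hinv' => [HQ HD].
have Hl' : l < m by apply: ltnW.
split=> j Hj.
  have Hq : (pos i j < c) || (c + l < pos i j).
    by case/orP: Hj => H; apply/orP; [left|right; lia].
  have [Ha Hmu] := quietB_act Hq (HQ j Hq).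
  have [H1 [H2 H3]] := HQ j Hq.
  have Hd : l_decided (gstate (Pbasic n) (runB t i m c) l.+1 j) = None by rewrite dec_S Ha.
  have Hrd : l_rd (gstate (Pbasic n) (runB t i m c) l.+1 j) = None.
    apply: rd_quiet => x v; apply/negP => /(recvB_val Hc Hl' Hinv) [_].
    rewrite /tgtB Hl; move: Hj; case/orP; lia.
  split=> //; split=> //.
  rewrite (cnt_S (undec_prev Hd) Hrd).
  have Hsub : [pred x | is_init1 (recvd (Pbasic n) (runB t i m c) l j x)] \subset
              [pred x | pos i x < n - t].
    apply/subsetP=> x; rewrite !inE /= (recvB_init _ _ Hc Hl' Hinv) /FB.
    have -> : (l == m.-1) = false by apply/eqP; lia.
    case/andP => Hqx; rewrite andFb orbF => /orP[//|/andP[/andP[/eqP E _] _]].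
    by move: Hqx; rewrite E ltnn orbF; lia.
  have := subset_leq_card Hsub; rewrite card_pos ?leq_subr // => H.
  apply: leq_trans (leq_add H (leqnn _)) _; lia.
have Hq : (pos i j < c) || (c + l < pos i j) by apply/orP; right; lia.
have [Ha Hmu] := quietB_act Hq (HQ j Hq).
have [H1 [H2 H3]] := HQ j Hq.
have Hd : l_decided (gstate (Pbasic n) (runB t i m c) l.+1 j) = None by rewrite dec_S Ha.
apply: Pb_rd0 => //.
apply: got0_B => //; first lia.
by rewrite /tgtB Hl Hj addnS.
Qed.

Lemma InvB_all n t (i : 'I_n) m c : t <= n -> n - t <= c -> c + m <= n ->
  forall l, l < m -> InvB t i m c l.
Proof.
move=> Htn Hc Hcm; elim=> [|l IH] Hl; first exact: InvB_0.
by apply: InvB_S => //; apply: IH; apply: ltnW.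
Qed.

Lemma runB_final n t (i : 'I_n) m c : t + 2 <= n -> n - t <= c -> c + m.+1 <= n ->
  gstate (Pbasic n) (runB t i m.+1 c) m.+1 i = LState m.+1 true None None c /\
  deciding (Pbasic n) (nth i (Lseq i) 1) false (runB t i m.+1 c) m.+1.
Proof.
move=> Htn Hc Hcm.
have Htn' : t <= n by lia.
have Hinv := @InvB_all n t i m.+1 c Htn' Hc Hcm m (ltnSn m).
have Hinv' := Hinv; case: Hinv' => [HQ HD].
split.
  have Hq : (pos i i < c) || (c + m < pos i i) by rewrite pos_self; apply/orP; left; lia.
  have [Ha Hmu] := quietB_act Hq (HQ i Hq).
  have Hd : l_decided (gstate (Pbasic n) (runB t i m.+1 c) m.+1 i) = None.
    by rewrite dec_S Ha; case: (HQ i Hq).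
  have Hrd : l_rd (gstate (Pbasic n) (runB t i m.+1 c) m.+1 i) = None.
    apply: rd_quiet => x v; apply/negP => /(recvB_val Hc (ltnSn m) Hinv) [_].
    by rewrite pos_self /tgtB ltnn.
  rewrite [LHS]lstate_eta time_g init_g Hd Hrd (cnt_S (undec_prev Hd) Hrd).
  have -> : r_init (runB t i m.+1 c) i = true.
    by rewrite /= pos_self; apply/eqP; lia.
  congr LState.
  have Hcn : c <= n by lia.
  rewrite -{2}(@card_pos n i c Hcn); apply: eq_card => x; rewrite !inE /=.
  rewrite (recvB_init _ _ Hc (ltnSn m) Hinv) /FB /= pos_self /tgtB ltnn !eqxx andbF orbF /=.
  case: (ltnP (pos i x) c) => H; first by rewrite /= orbT.
  have -> : (pos i x < n - t) = false by apply/negbTE; rewrite -leqNgt; lia.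
  by rewrite /= andbF.
set km := nth i (Lseq i) 1.
have Hkm : pos i km = 1 by apply: pos_nth; lia.
have Hq : (pos i km < c) || (c + m < pos i km) by rewrite Hkm; apply/orP; left; lia.
have [Ha Hmu] := quietB_act Hq (HQ km Hq).
have Hd : l_decided (gstate (Pbasic n) (runB t i m.+1 c) m.+1 km) = None.
  by rewrite dec_S Ha; case: (HQ km Hq).
have Hrd : l_rd (gstate (Pbasic n) (runB t i m.+1 c) m.+1 km) = Some false.
  apply: got0_B => //; first lia.
  by rewrite Hkm /tgtB ltnn.
split; rewrite /lst //.
by rewrite dec_S (Pb_rd0 _ Hd Hrd).
Qed.

Definition runZ n (i : 'I_n) : run n :=
  Run setT (fun _ _ _ => true) (fun j => pos i j != 1).

Lemma runZ_SO n t (i : 'I_n) : in_SO t (runZ i).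
Proof. by split=> //=; rewrite setCT cards0. Qed.

Lemma no_jdec_true n r m i j :
  l_rd (gstate (Pbasic n) r m i) = Some true -> ~ jdecided (Pbasic n) j false r m.
Proof.
case: m => [|m] // Hr [Hj [_ Hj0]].
case: (rd_true Hr) => q [_ Hq].
exact: (key Hq (conj Hj0 Hj)).
Qed.

Lemma jdec_of_rd0 n r m i :
  l_rd (gstate (Pbasic n) r m i) = Some false -> exists j, jdecided (Pbasic n) j false r m.
Proof.
case: m => [|m] // H.
case: (rd_false H) => j [_ Hj]; exists j.
split; first by rewrite /lst dec_S Hj.
by split=> //; apply: (Pb_undec Hj).
Qed.

Theorem mainTheorem5 (n t : nat) :
  t + 2 <= n -> implements_P0 n t (Pbasic n).
Proof.
move=> Htn i r m HSO.
have Htn' : t <= n by lia.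
rewrite /P0_action /lst.
have Htime := time_g (Pbasic n) r m i.
move Es: (gstate (Pbasic n) r m i) => s.
rewrite Es in Htime.
case Ed: (l_decided s) => [v|].
  by left; split=> //; apply: Pb_decided; rewrite Ed.
right.
case Ei: (l_init s).
  2: by left; split=> //; split; [left | rewrite /Pbasic Ed Ei].
have test1_of_true : Pbasic n i s = Decide true ->
    Kst t (Pbasic n) i s (fun r m => forall j, ~ deciding (Pbasic n) j false r m).
  move=> HPa r' m' _ Hs j Hdec; apply: (@key n r' m' i _ j Hdec).
  by rewrite /lst in Hs; rewrite Hs.
case Er: (l_rd s) => [[]|].
- have HPa : Pbasic n i s = Decide true by rewrite /Pbasic Ed Ei Er /= orbT.
  right; left; split=> //; split; last by split=> //; apply: test1_of_true.
  case=> [H|HK]; first by move: H; rewrite ?Ei.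
  have [j Hj] := HK r m HSO Es.
  by apply: (no_jdec_true (i := i) _ Hj); rewrite Es.
- left; split=> //; split; last by rewrite /Pbasic Ed Ei Er.
  right=> r' m' _ Hs; apply: (jdec_of_rd0 (i := i)).
  by rewrite /lst in Hs; rewrite Hs.
have nt0 : ~ (l_init s = false \/
    Kst t (Pbasic n) i s (fun r m => exists j, jdecided (Pbasic n) j false r m)).
  case=> [H|HK]; first by move: H; rewrite ?Ei.
  case: m Es Htime => [|m'] Es Htime.
    by have [j [_ [H _]]] := HK r 0 HSO Es.
  set c := l_cnt s.
  have Es' : gstate (Pbasic n) r m'.+1 i = LState m'.+1 true None None c.
    by rewrite Es [LHS]lstate_eta Htime Ei Ed Er.
  have Ed' : l_decided (gstate (Pbasic n) r m'.+1 i) = None by rewrite Es'.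
  have Er' : l_rd (gstate (Pbasic n) r m'.+1 i) = None by rewrite Es'.
  have Hc1 := fact1 HSO Ed' Er'; rewrite Es' /= in Hc1.
  have Hc2 := cnt_le Ed' Er'; rewrite Es' /= in Hc2.
  have Hm : m' <= t.
    move: Ed' Er'; case: m' {Es Htime Es' Hc1 Hc2} => [|m''] // Ed' Er'.
    exact: fact2 Htn' HSO Ed' Er'.
  have [HA1 HA2] := @runA_final n t i m' c Htn' Hm Hc1 Hc2.
  have Heq : lst (Pbasic n) (runA t i m'.+1 c) m'.+1 i = s.
    by rewrite /lst HA1 -Es Es'.
  have [j Hj] := HK _ _ (@runA_SO n t i m'.+1 c Htn') Heq.
  exact: HA2 Hj.
case: (ltnP n (l_cnt s + l_time s)) => Hcmp.
- have HPa : Pbasic n i s = Decide true by rewrite /Pbasic Ed Ei Er /= Hcmp.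
  right; left; split=> //; split; first by move=> H; apply: nt0; rewrite Ei.
  by split=> //; exact: test1_of_true.
- have HPa : Pbasic n i s = Noop by rewrite /Pbasic Ed Ei Er /= ltnNge Hcmp.
  right; right; split=> //; split; first by move=> H; apply: nt0; rewrite Ei.
  split=> // HK.
  case: m Es Htime Hcmp => [|m'] Es Htime Hcmp.
    have Hs0 : s = init_state true by rewrite -Es /= -(init_g (Pbasic n) r 0 i) Es Ei.
    set km := nth i (Lseq i) 1.
    have Hkm : pos i km = 1 by apply: pos_nth; lia.
    apply: (HK (runZ i) 0 (@runZ_SO n t i) _ km).
      by rewrite /lst Hs0 /= pos_self.
    split; first by [].
    by rewrite /lst dec_S /= Hkm eqxx /Pbasic.
  set c := l_cnt s.
  have Es' : gstate (Pbasic n) r m'.+1 i = LState m'.+1 true None None c.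
    by rewrite Es [LHS]lstate_eta Htime Ei Ed Er.
  have Ed' : l_decided (gstate (Pbasic n) r m'.+1 i) = None by rewrite Es'.
  have Er' : l_rd (gstate (Pbasic n) r m'.+1 i) = None by rewrite Es'.
  have Hc1 := fact1 HSO Ed' Er'; rewrite Es' /= in Hc1.
  rewrite Htime in Hcmp.
  have [HB1 HB2] := @runB_final n t i m' c Htn Hc1 Hcmp.
  apply: (HK (runB t i m'.+1 c) m'.+1 (@runB_SO n t i m'.+1 c Htn') _ _ HB2).
  by rewrite /lst HB1 -Es Es'.
Qed.
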